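(* Let $P$ be a correct net. The linear skeleton of the correction net $P_0$ of $P$, given by the multiplicative nodes (${\mathtt m}$-nodes) and the multiplicative (linear) paths between them (i.e. the paths made of ⅋-links (par-links) and $\otimes$-links connecting ${\mathtt m}$-nodes), is a linear order.
   Context: Nets are directed labelled hyper-graphs: nodes are typed ${\mathtt e}$ (exponential) or ${\mathtt m}$ (multiplicative); links (hyper-edges, with any number of source and target nodes) are labelled by $!$ (promotion), ${\mathsf d}$ (dereliction), ${\mathsf w}$ (weakening), ⅋ (par), $\otimes$ (tensor), $[\cdot]$ (context hole) or ${\tt genax}$ (generalised axiom); contraction is represented by an ${\mathtt e}$-node having several incoming ${\mathsf d}$-links. A pre-net has a root, a terminal ${\mathtt m}$-node (terminal = not the source of any link); every node has at least one incoming link and at most one outgoing link, and every ${\mathtt m}$-node has exactly one incoming link. A net is a pre-net with, for each $!$-link $l$, a box (a sub-pre-net not containing $l$, whose root is the ${\mathtt m}$-source of $l$), subject to nesting and closure conditions. The level of a link is the number of boxes it is nested in. The correction net $P_0$ of $P$ is obtained by collapsing every $!$-box at level 0 (the $!$-link together with its box) into a single ${\tt genax}$-link with the same interface (free variables). $P$ is correct if: the root of $P$ is the only terminal ${\mathtt m}$-node of $P_0$; $P_0$ is acyclic (no directed path of positive length from a node to itself); and the box of every $!$-link at level 0 is (recursively) correct. The only links connecting ${\mathtt m}$-nodes to ${\mathtt m}$-nodes are ⅋-links and $\otimes$-links. *)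

(* Defs.v *)
From HB Require Import structures.
From mathcomp Require Import all_boot.
Set Implicit Arguments. Unset Strict Implicit. Unset Printing Implicit Defensive.

(* Node types: e (exponential) and m (multiplicative). *)
Inductive kind := KE | KM.
Definition kind_eqb (a b : kind) : bool :=
  match a, b with KE, KE | KM, KM => true | _, _ => false end.
Lemma kind_eqP : Equality.axiom kind_eqb.
Proof. by case; case; constructor. Qed.
HB.instance Definition _ := hasDecEq.Build kind kind_eqP.

(* Link labels: !, d, w, par, tensor, context hole, generalised axiom. *)
Inductive label := LBang | LDer | LWeak | LPar | LTens | LHole | LGenax.
Definition label_eqb (a b : label) : bool :=
  match a, b with
  | LBang, LBang | LDer, LDer | LWeak, LWeak | LPar, LPar | LTens, LTens
  | LHole, LHole | LGenax, LGenax => true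
  | _, _ => false end.
Lemma label_eqP : Equality.axiom label_eqb.
Proof. by case; case; constructor. Qed.
HB.instance Definition _ := hasDecEq.Build label label_eqP.

(* A net: a finite directed labelled hypergraph, a root, and a box for every
   !-link (given by its set of links; the nodes of the box are the nodes
   incident to these links). *)
Record net := Net {
  node : finType;
  link : finType;
  kindof : node -> kind;
  labof : link -> label;
  src : link -> seq node;
  tgt : link -> seq node;
  root : node;
  box : link -> {set link}
}.

Section Nets.
Variable P : net.
Local Notation node := (node P).
Local Notation link := (link P).
Local Notation kindof := (@kindof P).
Local Notation labof := (@labof P).
Local Notation src := (@src P).
Local Notation tgt := (@tgt P).
Local Notation box := (@box P).

Definition wf_link (k : link) : Prop :=
  match labof k with
  | LBang => exists x y, [/\ src k = [:: x], tgt k = [:: y],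
                           kindof x = KM & kindof y = KE]
  | LDer => exists x y, [/\ src k = [::], tgt k = [:: x; y],
                          kindof x = KM & kindof y = KE]
  | LWeak => exists y, src k = [::] /\ tgt k = [:: y] /\ kindof y = KE
  | LPar | LTens => exists x y z, [/\ src k = [:: x; y], tgt k = [:: z],
                          kindof x = KM, kindof y = KE & kindof z = KM]
  | LHole => exists z ys, [/\ src k = [::], tgt k = z :: ys,
                          kindof z = KM & all (fun y => kindof y == KE) ys]
  | LGenax => src k = [::] /\ all (fun y => kindof y == KE) (tgt k)
  end.

Definition outgoing (n : node) : {set link} := [set k | n \in src k].
Definition incoming (n : node) : {set link} := [set k | n \in tgt k].

Definition prenet : Prop :=
  [/\ kindof (root P) = KM /\ outgoing (root P) = set0,
      (forall n, incoming n != set0),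
      (forall n, #|outgoing n| <= 1),
      (forall n, kindof n = KM -> #|incoming n| = 1)
    & (forall k, wf_link k)].

Definition isbang (k : link) : bool := labof k == LBang.

Definition incident (S : {set link}) (n : node) : bool :=
  [exists k in S, (n \in src k) || (n \in tgt k)].

Definition subprenet (S : {set link}) (x : node) : Prop :=
  [/\ incident S x,
      (forall k, k \in S -> x \notin src k)
    & (forall n, incident S n -> exists2 k, k \in S & n \in tgt k)].

Definition boxes_ok : Prop :=
  [/\ (forall l, isbang l ->
         l \notin box l /\ exists x, src l = [:: x] /\ subprenet (box l) x),
      (forall l l', isbang l -> isbang l' -> l' \in box l -> box l' \subset box l)
    & (forall l l', isbang l -> isbang l' -> l != l' ->
         [|| [disjoint box l & box l'], l \in box l' | l' \in box l])].

Definition is_net : Prop := prenet /\ boxes_ok.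

(* Correction net of the region S (a set of links: the whole net or a box). *)
Definition top0 (S : {set link}) (k : link) : bool :=
  (k \in S) && [forall l in S, isbang l ==> (k \notin box l)].

Definition fv_box (l : link) (n : node) : bool :=
  [&& kindof n == KE, incident (box l) n,
      [forall k in box l, n \notin src k]
    & [forall k in box l, isbang k ==> (n \notin tgt k)]].

(* links of P_0: inl k for a level-0 non-! link k,
   inr l for the genax-link replacing the level-0 !-link l and its box *)
Definition valid0 (S : {set link}) (e : link + link) : bool :=
  match e with
  | inl k => top0 S k && ~~ isbang k
  | inr l => top0 S l && isbang l
  end.
Definition src0 (e : link + link) : seq node :=
  match e with inl k => src k | inr _ => [::] end.
Definition tgt0 (e : link + link) : seq node :=
  match e with
  | inl k => tgt k
  | inr l => tgt l ++ [seq n <- enum node | fv_box l n]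
  end.
Definition lab0 (e : link + link) : label :=
  match e with inl k => labof k | inr _ => LGenax end.

Definition alive0 (S : {set link}) (n : node) : bool :=
  [exists e, valid0 S e && ((n \in src0 e) || (n \in tgt0 e))].
Definition step0 (S : {set link}) : rel node :=
  fun n n' => [exists e, [&& valid0 S e, n \in src0 e & n' \in tgt0 e]].
Definition terminal0 (S : {set link}) (n : node) : bool :=
  [forall e, valid0 S e ==> (n \notin src0 e)].
Definition acyclic0 (S : {set link}) : Prop :=
  forall n n', step0 S n n' -> ~~ connect (step0 S) n' n.

Definition cond0 (S : {set link}) (r : node) : Prop :=
  [/\ alive0 S r, kindof r = KM, terminal0 S r,
      (forall n, alive0 S n -> kindof n = KM -> terminal0 S n -> n = r)
    & acyclic0 S].

(* Correctness, recursively on the boxes at level 0 (fuel = size bound). *)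
Fixpoint corr (fuel : nat) (S : {set link}) (r : node) : Prop :=
  match fuel with
  | 0 => False
  | f.+1 => cond0 S r /\
      (forall l, valid0 S (inr l) -> forall x, src l = [:: x] -> corr f (box l) x)
  end.

Definition correct : Prop := corr #|link|.+1 [set: link] (root P).

Definition mstep0 : rel node :=
  fun u v => [&& kindof u == KM, kindof v == KM &
     [exists e, [&& valid0 [set: link] e, lab0 e \in [:: LPar; LTens],
                    u \in src0 e & v \in tgt0 e]]].
Definition skel_le : rel node := connect mstep0.
Definition skel_nodes : pred node :=
  fun n => alive0 [set: link] n && (kindof n == KM).

End Nets.
Arguments skel_le : clear implicits.
Arguments skel_nodes : clear implicits.
Arguments is_net : clear implicits.
Arguments correct : clear implicits.

Definition linear_order (T : Type) (A : pred T) (R : rel T) : Prop :=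
  [/\ {in A, reflexive R}, {in A &, antisymmetric R},
      {in A & &, transitive R} & {in A &, total R}].

(* Main.v *)
Require Import Defs.
From mathcomp Require Import all_boot.
Set Implicit Arguments. Unset Strict Implicit. Unset Printing Implicit Defensive.

Lemma fwd_total (T : finType) (g : rel T) :
  (forall a b b', g a b -> g a b' -> b = b') ->
  forall w u v, connect g w u -> connect g w v -> connect g u v || connect g v u.
Proof.
move=> Hd w u v /connectP [p Hp ->]; elim: p w Hp => [|a p IH] w /=.
  by move=> _ ->.
case/andP=> Ha Hp /connectP [[|b q]] /=.
  move=> _ ->; apply/orP; right; apply/connectP; by exists (a :: p) => //=; rewrite Ha.
case/andP => Hb Hq Hv; rewrite -(Hd _ _ _ Ha Hb) in Hq Hv.
by apply: IH => //; apply/connectP; exists q.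
Qed.

Lemma bwd_total (T : finType) (e : rel T) :
  (forall a a' b, e a b -> e a' b -> a = a') ->
  forall w u v, connect e u w -> connect e v w -> connect e u v || connect e v u.
Proof.
move=> Hd w u v.
have R x y : connect e x y = connect [rel a b | e b a] y x by rewrite (connect_rev e y x).
rewrite !R => H1 H2; rewrite orbC; apply: (fwd_total _ H1 H2) => a b b' /= ??.
exact: (Hd _ _ a).
Qed.

Section L.
Variable P : net.
Hypothesis Hnet : is_net P.
Hypothesis Hc0 : cond0 [set: link P] (Defs.root P).
Let S := [set: link P].

Lemma wfP (k : link P) : wf_link k.
Proof. by case: Hnet => -[] _ _ _ _ H _; apply: H. Qed.

Lemma inc1 (v : node P) : kindof v = KM -> #|incoming v| = 1.
Proof. by case: Hnet => -[] _ _ _ H _ _; apply: H. Qed.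

Lemma succ (u : node P) : alive0 S u -> kindof u = KM -> u != Defs.root P ->
  exists v, mstep0 u v && alive0 S v.
Proof.
move=> Hal Hk Hne.
case: Hc0 => _ _ _ Huniq _.
have : ~~ terminal0 S u.
  by apply/negP => Ht; move/eqP: Hne; apply; apply: Huniq.
rewrite negb_forall => /existsP [[k|l]] /=; rewrite negb_imply ?negbK;
  case/andP => Hv Hs; last by move: Hs.
move: Hv (wfP k) => /= /andP [Htop Hnb].
rewrite /wf_link /isbang in Hnb *.
case Hl: (labof k) Hnb => //= _;
  try (by case=> x [y [Hsrc]]; rewrite Hsrc in_nil in Hs);
  try (by case=> y [Hsrc]; rewrite Hsrc in_nil in Hs);
  try (by case=> z [ys [Hsrc]]; rewrite Hsrc in_nil in Hs);
  try (by case=> Hsrc; rewrite Hsrc in_nil in Hs);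
  case=> x [y [z [Hsrc Htgt Hx Hy Hz]]];
  exists z; apply/andP; split;
  try (apply/and3P; split; [by rewrite Hk| by rewrite Hz|];
       apply/existsP; exists (inl k); rewrite /= Htop Hl /isbang Hl /= Hs Htgt inE eqxx //);
  apply/existsP; exists (inl k); rewrite /= Htop /isbang Hl /= Htgt inE eqxx orbT //.
Qed.


Lemma mstep_inv (u v : node P) : mstep0 u v ->
  exists k : link P, v \in tgt k /\ exists y, src k = [:: u; y].
Proof.
case/and3P => Hu _ /existsP [[k|l]] /and4P [_ Hl Hs Ht]; last by move: Hl.
exists k; split => //.
move: (wfP k) Hl Hs; rewrite /wf_link /=.
case: (labof k) => //= -[x [y [z [Hsrc _ _ Hy _]]]] _;
  rewrite Hsrc !inE => /orP [/eqP->|/eqP Huy]; (try by exists y);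
  by move: Hu; rewrite Huy Hy.
Qed.

Lemma mstep_bdet (u u' v : node P) : mstep0 u v -> mstep0 u' v -> u = u'.
Proof.
move=> H1 H2; have Hv : kindof v = KM by case/and3P: H1 => _ /eqP.
case: (mstep_inv H1) => k [Hk [y Hy]]; case: (mstep_inv H2) => k' [Hk' [y' Hy']].
move: (inc1 Hv) => /eqP /cards1P [w Hw].
have : k \in incoming v by rewrite inE.
have : k' \in incoming v by rewrite inE.
rewrite Hw !inE => /eqP Ek' /eqP Ek; subst k k'.
by move: Hy'; rewrite Hy => -[].
Qed.

Lemma mstep_step (u v : node P) : mstep0 u v -> step0 S u v.
Proof.
case/and3P => _ _ /existsP [e /and4P [H1 _ H3 H4]].
by apply/existsP; exists e; rewrite H1 H3 H4.
Qed.

Lemma acyc : acyclic0 S.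
Proof. by case: Hc0. Qed.

Lemma mstep_skel (u v : node P) : mstep0 u v -> skel_nodes P v.
Proof.
case/and3P => _ Hv /existsP [e /and4P [H1 _ H3 H4]].
rewrite /skel_nodes Hv andbT; apply/existsP; exists e; by rewrite H1 H4 orbT.
Qed.

Lemma reach n (u : node P) : #|[set x | connect (step0 S) u x]| < n ->
  skel_nodes P u -> connect (@mstep0 P) u (Defs.root P).
Proof.
elim: n u => // n IH u Hn /andP [Hal /eqP Hk].
have [->|Hne] := eqVneq u (Defs.root P); first exact: connect0.
case: (succ Hal Hk Hne) => v /andP [Huv _].
apply: (connect_trans (connect1 Huv)); apply: IH (mstep_skel Huv).
rewrite ltnS in Hn; apply: (leq_trans _ Hn); apply: proper_card; apply/properP; split.
  apply/subsetP => x; rewrite !inE; apply: connect_trans.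
  exact: connect1 (mstep_step Huv).
exists u; rewrite !inE ?connect0 //.
exact: acyc (mstep_step Huv).
Qed.

End L.

Theorem lemma1 (P : net) :
  is_net P -> correct P -> linear_order (skel_nodes P) (skel_le P).
Proof.
move=> Hn [Hc _].
have Hr u : skel_nodes P u -> connect (@mstep0 P) u (Defs.root P).
  by move=> Hu; apply: (reach Hn Hc (ltnSn _) Hu).
split.
- move=> u _; exact: connect0.
- move=> u v _ _ /andP [H1 H2].
  case/connectP: H1 => [[|a p]] /= ; first by [].
  case/andP => Ha Hp Hv.
  have Ha' : connect (@mstep0 P) a u.
    apply: connect_trans (H2); apply/connectP; by exists p.
  move: (acyc Hc (mstep_step Ha)).
  by rewrite (connect_sub (fun x y (H : mstep0 x y) => connect1 (mstep_step H)) Ha').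
- move=> v u w _ _ _; exact: connect_trans.
- move=> u v Hu Hv; exact: (bwd_total (mstep_bdet Hn) (Hr _ Hu) (Hr _ Hv)).
Qed.
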